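(* Let $K_{2,m_1,m_2}=(Q_0,Q_1)$ be the generalized 2-Kronecker quiver having at least one source and at least one sink. Let $\beta=(n,\dots,n)\in\mathbb{Z}_{\ge0}^{Q_0}$, impose the complete standard filtration at each vertex, and let $\mathbb{U}_\beta=U^{Q_0}$. Then $\mathbb{C}[F^{\bullet}Rep(K_{2,m_1,m_2},\beta)]^{\mathbb{U}_\beta}=\mathbb{C}[\mathfrak{t}^{\oplus Q_1}]$.
   Context: $K_{2,m_1,m_2}$ is a quiver whose underlying graph consists of two vertices $u,v$ joined by two disjoint paths, one passing through $m_1$ intermediate vertices and the other through $m_2$ intermediate vertices (so it is a cycle), with the arrows oriented arbitrarily. At each vertex put $\mathbb{C}^n$ with the flag $0\subset\mathbb{C}^1\subset\cdots\subset\mathbb{C}^n$ of standard coordinate subspaces; $F^{\bullet}Rep(K_{2,m_1,m_2},\beta)=\mathfrak{b}^{\oplus Q_1}$ consists of tuples $(A_a)$ of upper triangular $n\times n$ matrices. $U$ is the group of upper unitriangular $n\times n$ matrices, acting by $(u_i)\cdot(A_a)=(u_{h(a)}A_au_{t(a)}^{-1})$ with $h,t$ head and tail. $\mathbb{C}[\mathfrak{t}^{\oplus Q_1}]$ is the subalgebra generated by the diagonal entries of all $A_a$. *)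

(* Defs.v *)
From HB Require Import structures.
From mathcomp Require Import all_boot all_order all_algebra.
From mathcomp Require Import mpoly.
Set Implicit Arguments. Unset Strict Implicit. Unset Printing Implicit Defensive.
Import Order.TTheory GRing.Theory Num.Theory.
Local Open Scope ring_scope.

Definition is_source (Q0 Q1 : finType) (hd : Q1 -> Q0) (x : Q0) : bool :=
  [forall a, hd a != x].
Definition is_sink (Q0 Q1 : finType) (tl : Q1 -> Q0) (x : Q0) : bool :=
  [forall a, tl a != x].

(* ---------- the generalized 2-Kronecker quiver K_{2,m1,m2} ----------
   Vertices are 'I_(m1+m2+2) placed around a cycle: u = 0, then the m1
   intermediate vertices 1..m1 of the first path, v = m1+1, then the m2
   intermediate vertices m1+2 .. m1+m2+1 of the second path back to u.
   Arrows are 'I_(m1+m2+2): arrow k joins vertex k and vertex k+1 (mod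
   m1+m2+2); the orientation o k = true means k -> k+1, false means
   k+1 -> k. *)
Definition Kvert (m1 m2 : nat) := 'I_(m1 + m2 + 2).
Definition Karr (m1 m2 : nat) := 'I_(m1 + m2 + 2).

Definition Ktail (m1 m2 : nat) (o : Karr m1 m2 -> bool) (k : Karr m1 m2)
  : Kvert m1 m2 := if o k then k else ordS k.
Definition Khead (m1 m2 : nat) (o : Karr m1 m2 -> bool) (k : Karr m1 m2)
  : Kvert m1 m2 := if o k then ordS k else k.

(* upper triangular = preserves the standard complete flag *)
Definition upper_tri (R : nzRingType) (n : nat) (A : 'M[R]_n) : bool :=
  [forall i : 'I_n, forall j : 'I_n, (j < i)%N ==> (A i j == 0)].

Definition unitriangular (R : nzRingType) (n : nat) (A : 'M[R]_n) : bool :=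
  upper_tri A && [forall i : 'I_n, A i i == 1].

Definition Uact (R : comUnitRingType) (Q0 Q1 : finType) (hd tl : Q1 -> Q0)
  (n : nat) (g : Q0 -> 'M[R]_n) (A : Q1 -> 'M[R]_n) : Q1 -> 'M[R]_n :=
  fun a => g (hd a) *m A a *m invmx (g (tl a)).

Definition nentries (Q1 : finType) (n : nat) : nat :=
  #|{: Q1 * ('I_n * 'I_n)}|.
Definition entry_coords (R : Type) (Q1 : finType) (n : nat)
  (A : Q1 -> 'M[R]_n) : 'I_(nentries Q1 n) -> R :=
  fun k => let x := enum_val k in A x.1 x.2.1 x.2.2.

Definition ndiag (Q1 : finType) (n : nat) : nat := #|{: Q1 * 'I_n}|.
Definition diag_coords (R : Type) (Q1 : finType) (n : nat)
  (A : Q1 -> 'M[R]_n) : 'I_(ndiag Q1 n) -> R :=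
  fun k => let x := enum_val k in A x.1 x.2 x.2.

(* An element of C[F^. Rep(Q, beta)] = C[b^{Q1}] is the restriction to
   b^{Q1} of a polynomial p in the entries.  It is U^{Q0}-invariant if its
   values on b^{Q1} are invariant under the action. *)
Definition U_invariant (R : comUnitRingType) (Q0 Q1 : finType)
  (hd tl : Q1 -> Q0) (n : nat) (p : {mpoly R[nentries Q1 n]}) : Prop :=
  forall (g : Q0 -> 'M[R]_n) (A : Q1 -> 'M[R]_n),
    (forall x, unitriangular (g x)) -> (forall a, upper_tri (A a)) ->
    p.@[entry_coords (Uact hd tl g A)] = p.@[entry_coords A].

(* The restriction of p to b^{Q1} lies in the subalgebra C[t^{Q1}]
   generated by the diagonal entries of all A_a. *)
Definition in_diag_subalgebra (R : comUnitRingType) (Q1 : finType) (n : nat)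
  (p : {mpoly R[nentries Q1 n]}) : Prop :=
  exists q : {mpoly R[ndiag Q1 n]},
    forall A : Q1 -> 'M[R]_n, (forall a, upper_tri (A a)) ->
      p.@[entry_coords A] = q.@[diag_coords A].

(* Main.v *)
Require Import Defs.
From HB Require Import structures.
From mathcomp Require Import all_boot all_order all_algebra.
From mathcomp Require Import mpoly.
From mathcomp Require Import zify ring lra.
Set Implicit Arguments. Unset Strict Implicit. Unset Printing Implicit Defensive.
Import Order.TTheory GRing.Theory Num.Theory.
Local Open Scope ring_scope.

Lemma utP (R : nzRingType) n (A : 'M[R]_n) :
  reflect (forall i j : 'I_n, (j < i)%N -> A i j = 0) (upper_tri A).
Proof.
apply: (iffP forallP) => [H i j ji | H i].
  by move: (H i) => /forallP /(_ j) /implyP /(_ ji) /eqP.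
by apply/forallP=> j; apply/implyP=> ji; apply/eqP; exact: H.
Qed.

Lemma utE (R : nzRingType) n (A : 'M[R]_n) :
  upper_tri A -> forall i j : 'I_n, (j < i)%N -> A i j = 0.
Proof. by move/utP. Qed.

Lemma ord_gtF n (i j : 'I_n) : (j < i)%N -> (i == j) = false.
Proof. by move=> ji; apply/eqP => e; rewrite e ltnn in ji. Qed.

Lemma ord_ltF n (i j : 'I_n) : (i < j)%N -> (i == j) = false.
Proof. by move=> ji; apply/eqP => e; rewrite e ltnn in ji. Qed.

Lemma ut_mul (R : comNzRingType) n (A B : 'M[R]_n) :
  upper_tri A -> upper_tri B -> upper_tri (A *m B) /\
  forall i, (A *m B) i i = A i i * B i i.
Proof.
move=> /utP HA /utP HB; split.
  apply/utP => i j ji; rewrite mxE big1 // => k _.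
  have [ki|ik] := ltnP k i; first by rewrite HA // mul0r.
  by rewrite HB ?mulr0 // (leq_trans ji ik).
move=> i; rewrite mxE (bigD1 i) //= big1 ?addr0 // => k ki.
have [kli|ilk] := ltnP k i; first by rewrite HA // mul0r.
by rewrite HB ?mulr0 // ltn_neqAle eq_sym ki.
Qed.

Lemma unitri_unit (R : comUnitRingType) n (g : 'M[R]_n) :
  unitriangular g -> g \in unitmx.
Proof.
case/andP => /utP Hu /forallP Hd.
rewrite unitmxE -det_tr det_trig.
  by rewrite big1 ?unitr1 // => i _; rewrite mxE (eqP (Hd i)).
by apply/is_trig_mxP => i j ij; rewrite mxE Hu.
Qed.

Lemma unitri_inv (R : comUnitRingType) n (g : 'M[R]_n) :
  unitriangular g -> upper_tri (invmx g) /\ forall i, invmx g i i = 1.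
Proof.
move=> gu; have gU := unitri_unit gu.
case/andP: gu => /utP Hu /forallP Hd.
set h := invmx g.
have gh : g *m h = 1%:M by rewrite mulmxV.
have Hrow : forall i j : 'I_n, (g *m h) i j = h i j + \sum_(k : 'I_n | (i < k)%N) g i k * h k j.
  move=> i j; rewrite mxE (bigD1 i) //= (eqP (Hd i)) mul1r; congr (_ + _).
  rewrite (bigID (fun k : 'I_n => (i < k)%N)) /= [X in _ + X]big1 ?addr0.
    apply: eq_bigl => k /=.
    by apply: andb_idl => ik; apply/eqP => ki; rewrite ki ltnn in ik.
  move=> k /andP [ki]; rewrite -leqNgt => kli.
  by rewrite Hu ?mul0r // ltn_neqAle kli andbT.
have low : forall (j i : 'I_n), (j < i)%N -> h i j = 0.
  move=> j.
  suff: forall m (i : 'I_n), (n - i <= m)%N -> (j < i)%N -> h i j = 0.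
    by move=> H i; apply: (H n); rewrite leq_subr.
  elim=> [|m IH] i.
    by move=> Hm; have := ltn_ord i; rewrite -subn_gt0; case: (n - i)%N Hm.
  move=> Hm ji; have := Hrow i j; rewrite gh mxE (ord_gtF ji) /=.
  rewrite big1 ?addr0; first by move=> /esym ->.
  move=> k ik; rewrite IH ?mulr0 //; last exact: ltn_trans ik.
  by have := ltn_ord k; lia.
split; first by apply/utP => i j; exact: low.
move=> i; have := Hrow i i; rewrite gh mxE eqxx /= big1 ?addr0; first by move=> /esym ->.
by move=> k ik; rewrite low ?mulr0.
Qed.

Lemma conv (R : comUnitRingType) (Q0 Q1 : finType) (hd tl : Q1 -> Q0) n
  (p : {mpoly R[nentries Q1 n]}) :
  in_diag_subalgebra p -> U_invariant hd tl p.
Proof.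
move=> [q Hq] g A Hg HA.
have H : forall a, upper_tri (Uact hd tl g A a) /\
   forall i, Uact hd tl g A a i i = A a i i.
  move=> a; rewrite /Uact.
  have [Hi1 Hi2] := unitri_inv (Hg (tl a)).
  have gu : upper_tri (g (hd a)) by case/andP: (Hg (hd a)).
  have gd : forall i, g (hd a) i i = 1 by case/andP: (Hg (hd a)) => _ /forallP H i; apply/eqP.
  have [U1 D1] := ut_mul gu (HA a).
  have [U2 D2] := ut_mul U1 Hi1.
  by split => // i; rewrite D2 D1 gd Hi2 mul1r mulr1.
rewrite Hq; last by move=> a; case: (H a).
rewrite Hq //; apply: meval_eq => k; rewrite /diag_coords.
by case: (H (enum_val k).1) => _ ->.
Qed.

Section Step.
Variables (R : comUnitRingType) (n : nat).

Lemma deltaA (i j : 'I_n) (A : 'M[R]_n) k l :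
  (delta_mx i j *m A) k l = (k == i)%:R * A j l.
Proof.
rewrite mxE (bigD1 j) //= big1 ?addr0 => [|m mj]; rewrite mxE.
  by rewrite eqxx andbT.
by rewrite (negbTE mj) andbF mul0r.
Qed.

Lemma Adelta (i j : 'I_n) (A : 'M[R]_n) k l :
  (A *m delta_mx i j) k l = A k i * (l == j)%:R.
Proof.
rewrite mxE (bigD1 i) //= big1 ?addr0 => [|m mi]; rewrite mxE.
  by rewrite eqxx.
by rewrite (negbTE mi) mulr0.
Qed.

Lemma deltaA' (i j : 'I_n) (A : 'M[R]_n) k l :
  \sum_m delta_mx i j k m * A m l = (k == i)%:R * A j l.
Proof. by have := deltaA i j A k l; rewrite mxE. Qed.

Lemma Adelta' (i j : 'I_n) (A : 'M[R]_n) k l :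
  \sum_m A k m * delta_mx i j m l = A k i * (l == j)%:R.
Proof. by have := Adelta i j A k l; rewrite mxE. Qed.

Definition Eg (x : R) (i j : 'I_n) : 'M[R]_n := 1%:M + x *: delta_mx i j.

Lemma Eg_inv x (i j : 'I_n) : (i < j)%N ->
  invmx (Eg x i j) = 1%:M - x *: delta_mx i j.
Proof.
move=> ij.
have e : Eg x i j *m (1%:M - x *: delta_mx i j) = 1%:M.
  rewrite /Eg mulmxBr mulmx1 mulmxDl mul1mx -!scalemxAl -scalemxAr.
  rewrite mul_delta_mx_0 ?ord_gtF //.
  by apply/matrixP => a b; rewrite !mxE; ring.
have [U _] := mulmx1_unit e.
by rewrite -[invmx _]mulmx1 -{1}e mulmxA mulVmx // mul1mx.
Qed.

Lemma Eg_unitri x (i j : 'I_n) : (i < j)%N -> unitriangular (Eg x i j).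
Proof.
move=> ij; apply/andP; split.
  apply/utP => k l lk; rewrite !mxE (ord_gtF lk) /=.
  case: (eqVneq k i) => [ki|]; last by rewrite /= mulr0 addr0.
  case: (eqVneq l j) => [lj|]; last by rewrite andbF mulr0 addr0.
  by move: lk; rewrite ki lj => /(ltn_trans ij); rewrite ltnn.
apply/forallP => k; rewrite !mxE eqxx.
case: (eqVneq k i) => [ki|] /=; last by rewrite mulr0 addr0.
by rewrite ki (ord_ltF ij) mulr0 addr0.
Qed.

Lemma Eg_entry x y (i j : 'I_n) (A : 'M[R]_n) k l :
  (Eg x i j *m A *m (1%:M - y *: delta_mx i j)) k l =
  A k l + x * ((k == i)%:R * A j l) - y * (A k i * (l == j)%:R)
   - x * y * ((k == i)%:R * A j i * (l == j)%:R).
Proof.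
rewrite /Eg mulmxBr mulmx1 mulmxDl mul1mx -!scalemxAl -!scalemxAr mulmxDl.
rewrite -scalemxAl !mxE !deltaA' !Adelta' deltaA.
ring.
Qed.

End Step.

Section Step2.
Variables (R : comUnitRingType) (Q0 Q1 : finType) (hd tl : Q1 -> Q0) (n : nat).

Lemma step (p : {mpoly R[nentries Q1 n]}) (Hp : U_invariant hd tl p)
  (A : Q1 -> 'M[R]_n) (HA : forall a, upper_tri (A a)) (i j : 'I_n)
  (ij : (i < j)%N) (x : Q0 -> R)
  (Hx : forall a, x (hd a) * A a j j - x (tl a) * A a i i + A a i j = 0) :
  let A' := Uact hd tl (fun v => Eg (x v) i j) A in
  p.@[entry_coords A'] = p.@[entry_coords A] /\ (forall a, A' a i j = 0) /\
  forall a (k l : 'I_n), ~~ ((k == i) && (l == j)) -> (l + i <= k + j)%N ->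
    A' a k l = A a k l.
Proof.
move=> A'; split; first by apply: Hp => // v; exact: Eg_unitri.
have E a k l : A' a k l = A a k l + x (hd a) * ((k == i)%:R * A a j l)
   - x (tl a) * (A a k i * (l == j)%:R)
   - x (hd a) * x (tl a) * ((k == i)%:R * A a j i * (l == j)%:R).
  by rewrite /A' /Uact Eg_inv // Eg_entry.
have t3 a : A a j i = 0 by apply: (utE (HA a)).
split.
  move=> a; rewrite E !eqxx /= t3 -[RHS](Hx a) mulr1n; ring.
move=> a k l nkl gap; rewrite E t3.
have t1 : (k == i)%:R * A a j l = 0.
  case: (eqVneq k i) => [ki|_]; last by rewrite mul0r.
  rewrite ki eqxx /= in nkl gap; rewrite (utE (HA a)) ?mulr0 //.
  rewrite ltn_neqAle; apply/andP; split; first exact: nkl.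
  by rewrite addnC leq_add2l in gap.
have t2 : A a k i * (l == j)%:R = 0.
  case: (eqVneq l j) => [lj|_]; last by rewrite mulr0.
  rewrite lj eqxx andbT /= in nkl gap; rewrite (utE (HA a)) ?mul0r //.
  rewrite ltn_neqAle; apply/andP; split; first by rewrite eq_sym.
  by move: gap; lia.
rewrite t1 t2; ring.
Qed.

End Step2.

Section Solve.
Variables (R : comUnitRingType) (N n : nat) (hd tl : 'I_N -> 'I_N).

Lemma sum_eqR (w : 'I_N) (c : R) (f : 'I_N -> R) :
  \sum_v (v == w)%:R * c * f v = c * f w.
Proof.
rewrite (bigD1 w) //= big1 ?addr0 => [|v /negbTE ->]; first by rewrite eqxx mul1r.
by rewrite !mul0r.
Qed.

Definition Msys (A : 'I_N -> 'M[R]_n) (i j : 'I_n) : 'M[R]_N :=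
  \matrix_(a, v) ((v == hd a)%:R * A a j j - (v == tl a)%:R * A a i i).

Lemma solve (A : 'I_N -> 'M[R]_n) (i j : 'I_n) :
  Msys A i j \in unitmx -> exists x : 'I_N -> R,
    forall a, x (hd a) * A a j j - x (tl a) * A a i i + A a i j = 0.
Proof.
move=> U.
pose b : 'cV[R]_N := \col_a (- A a i j).
pose X := invmx (Msys A i j) *m b.
have MX : Msys A i j *m X = b by rewrite /X mulKVmx.
clearbody X.
exists (fun v => X v 0) => a.
have := congr1 (fun M : 'cV[R]_N => M a 0) MX => /=.
rewrite !mxE.
under eq_bigr do rewrite mxE mulrBl.
rewrite sumrB !sum_eqR => H.
by rewrite (mulrC (X (hd a) 0)) (mulrC (X (tl a) 0)) H addNr.
Qed.

End Solve.

Lemma rank_uniq (n d k d' k' : nat) : (k < n)%N -> (k' < n)%N ->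
  (d * n + k = d' * n + k')%N -> d = d' /\ k = k'.
Proof.
move=> kn k'n e.
have n0 : (0 < n)%N by apply: leq_ltn_trans kn.
have h1 := congr1 (fun x => x %% n)%N e; have h2 := congr1 (fun x => x %/ n)%N e.
rewrite /= !modnMDl !modn_small // in h1.
by rewrite /= !divnMDl // !divn_small // !addn0 in h2.
Qed.

Section Iter.
Variables (R : comUnitRingType) (N n : nat) (hd tl : 'I_N -> 'I_N).

Definition goodA (A : 'I_N -> 'M[R]_n) :=
  forall i j : 'I_n, (i < j)%N -> Msys hd tl A i j \in unitmx.

Lemma Msys_diag (A B : 'I_N -> 'M[R]_n) i j :
  (forall a k, A a k k = B a k k) -> Msys hd tl A i j = Msys hd tl B i j.
Proof. by move=> H; apply/matrixP => a v; rewrite !mxE !H. Qed.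

Lemma iter (p : {mpoly R[nentries ('I_N) n]}) (Hp : U_invariant hd tl p) :
  forall m (A : 'I_N -> 'M[R]_n), (forall a, upper_tri (A a)) -> goodA A ->
  exists A' : 'I_N -> 'M[R]_n, [/\ forall a, upper_tri (A' a),
    forall a k, A' a k k = A a k k,
    p.@[entry_coords A'] = p.@[entry_coords A] &
    forall a (k l : 'I_n), (k < l)%N -> ((l - k) * n + k < m)%N -> A' a k l = 0].
Proof.
elim=> [|m IH] A HA gA.
  by exists A; split.
have [A1 [HA1 D1 P1 Z1]] := IH A HA gA.
have gA1 : goodA A1 by move=> i j ij; rewrite (@Msys_diag A1 A) ?D1 //; exact: gA.
have em := divn_eq m n.
set d := (m %/ n)%N in em; set i0 := (m %% n)%N in em.
case: (boolP ((0 < d)%N && (i0 + d < n)%N)) => [/andP [d0 jn]|nc]; last first.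
  exists A1; split => // a k l kl rk.
  apply: Z1 => //; rewrite ltn_neqAle -ltnS rk andbT; apply/negP => /eqP e.
  have [e1 e2] : (l - k)%N = d /\ (k:nat) = i0.
    apply: (@rank_uniq n) => //; last by rewrite e.
    by rewrite ltn_pmod // (leq_ltn_trans _ (ltn_ord k)).
  case/negP: nc; rewrite -e1 -e2 subn_gt0 kl /=.
  by rewrite subnKC ?ltn_ord // ltnW.
have i0n : (i0 < n)%N by apply: leq_ltn_trans jn; exact: leq_addr.
pose i := Ordinal i0n; pose j := Ordinal jn.
have ij : (i < j)%N by rewrite /= -{1}[i0]addn0 ltn_add2l.
have [x Hx] := solve (gA1 i j ij).
have [P2 [Z2 S2]] := step Hp HA1 ij Hx.
set A2 := Uact _ _ _ A1 in P2 Z2 S2.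
exists A2; split.
- move=> a; apply/utP => k l lk; rewrite S2 ?(utE (HA1 a)) //.
    apply/negP => /andP [/eqP ki /eqP lj]; move: lk ij; rewrite ki lj => a1 a2.
    by have := ltn_trans a1 a2; rewrite ltnn.
  by move: lk ij => /= a1 a2; lia.
- move=> a k; rewrite S2 ?D1 //.
    apply/negP => /andP [/eqP ki /eqP kj]; move: ij; rewrite -ki -kj ltnn //.
  by move: ij => /=; lia.
- by rewrite P2 P1.
move=> a k l kl rk.
case: (boolP ((k == i) && (l == j))) => [/andP [/eqP -> /eqP ->]|nij]; first exact: Z2.
have rk' : ((l - k) * n + k < m)%N.
  rewrite ltn_neqAle -ltnS rk andbT; apply/negP => /eqP e.
  have [e1 e2] : (l - k)%N = d /\ (k:nat) = i0.
    by apply: (@rank_uniq n) => //; rewrite e.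
  case/negP: nij; apply/andP; split; apply/eqP/val_inj => //=.
  by rewrite -e1 -e2 subnKC // ltnW.
rewrite S2 ?Z1 //.
have kn := ltn_ord k.
have : (l - k <= d)%N.
  rewrite leqNgt; apply/negP => H.
  have : ((d.+1) * n <= (l - k) * n)%N by rewrite leq_mul2r H orbT.
  by move: rk' ; rewrite em mulSn; lia.
by move=> /=; lia.
Qed.

End Iter.

Definition Dg (R : nzRingType) (Q1 : Type) n (A : Q1 -> 'M[R]_n) : Q1 -> 'M[R]_n :=
  fun a => \matrix_(k, l) if k == l then A a k k else 0.

Lemma good_diag (R : comUnitRingType) N n (hd tl : 'I_N -> 'I_N)
  (p : {mpoly R[nentries ('I_N) n]}) (Hp : U_invariant hd tl p)
  (A : 'I_N -> 'M[R]_n) : (forall a, upper_tri (A a)) -> goodA hd tl A ->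
  p.@[entry_coords A] = p.@[entry_coords (Dg A)].
Proof.
move=> HA gA.
have [A' [HA' D' P' Z']] := iter Hp (n * n) HA gA.
rewrite -P'; apply: meval_eq => x; rewrite /entry_coords.
move: (enum_val x) => [a [k l]] /=; rewrite mxE.
case: (eqVneq k l) => [->|nkl]; first by rewrite D'.
case: (ltnP k l) => [kl|lk].
- rewrite Z' //.
  have kn := ltn_ord k; have ln := ltn_ord l.
  have h : ((l - k).+1 * n <= n * n)%N by rewrite leq_mul2r; apply/orP; right; lia.
  by move: h; rewrite mulSn; lia.
- rewrite (utE (HA' a)) // ltn_neqAle lk andbT.
  by apply: contra nkl => /eqP e; apply/eqP/val_inj.
Qed.

Lemma cyc (T : Type) N (f : 'I_N -> T) :
  (forall k : 'I_N, (k.+1 < N)%N -> f k = f (ordS k)) ->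
  forall k z : 'I_N, f k = f z.
Proof.
move=> H.
suff S : forall m (Hm : (m < N)%N) (z : 'I_N), f (Ordinal Hm) = f (@Ordinal N 0 (leq_ltn_trans (leq0n _) (ltn_ord z))).
  move=> [k Hk] z.
  rewrite (S k Hk z) -(S _ (ltn_ord z) z).
  by congr f; apply: val_inj.
elim=> [|m IH] Hm z; first by congr f; apply: val_inj.
have Hm' : (m < N)%N by apply: ltnW.
rewrite -(IH Hm' z) (H (Ordinal Hm')) //.
by congr f; apply: val_inj => /=; rewrite modn_small.
Qed.

Section Generic.
Variables (C : numFieldType) (m1 m2 n : nat) (o : Karr m1 m2 -> bool).

Fact lastA_lt : (m1 + m2 + 1 < m1 + m2 + 2)%N.
Proof. by rewrite ltn_add2l. Qed.

Definition lastA : Karr m1 m2 := Ordinal lastA_lt.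

Definition epert (a : Karr m1 m2) (k : 'I_n) : C :=
  if a == lastA then (k.+1)%:R else 1.

Definition Eper (a : Karr m1 m2) : 'M[C]_n :=
  \matrix_(k, l) if k == l then epert a k else 0.

Lemma sum_eqL (N : nat) (w : 'I_N) (c : C) (f : 'I_N -> C) :
  \sum_v f v * ((v == w)%:R * c) = f w * c.
Proof.
rewrite (bigD1 w) //= big1 ?addr0 => [|v /negbTE ->]; first by rewrite eqxx mul1r.
by rewrite mul0r mulr0.
Qed.

Lemma M1_unit (i j : 'I_n) : (i < j)%N ->
  Msys (Khead o) (Ktail o) Eper i j \in unitmx.
Proof.
move=> ij; rewrite unitmxE unitfE -det_tr; apply/negP => /det0P [v vn0 vM].
pose f w := v 0 w.
have Hf a : f (Khead o a) * epert a j = f (Ktail o a) * epert a i.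
  have := congr1 (fun M : 'rV[C]_(m1 + m2 + 2) => M 0 a) vM => /=.
  rewrite /Msys !mxE.
  under eq_bigr => w _ do rewrite !mxE mulrBr.
  rewrite sumrB !sum_eqL !eqxx => /eqP; rewrite subr_eq0 => /eqP.
  by rewrite /f.
have Hc : forall k z, f k = f z.
  apply: cyc => k kN.
  have kl : k != lastA.
    apply/eqP => e; move: kN; rewrite e /= -addnS ltnNge leqnn //.
  have := Hf k; rewrite /epert (negbTE kl) !mulr1 /Khead /Ktail.
  by case: (o k) => //= ->.
have := Hf lastA; rewrite /epert eqxx (Hc (Khead o lastA) lastA) (Hc (Ktail o lastA) lastA).
move=> /eqP; rewrite -subr_eq0 -mulrBr mulf_eq0 subr_eq0 eqr_nat eqSS.
rewrite (gtn_eqF ij) orbF => /eqP f0.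
case/eqP: vn0; apply/matrixP => r w; rewrite ord1 mxE.
by rewrite -/(f w) (Hc w lastA) f0.
Qed.

End Generic.

Lemma mmap_horner (R : comNzRingType) k (h : 'I_k -> {poly R}) (p : {mpoly R[k]}) t :
  (mmap (@polyC R) h p).[t] = p.@[fun i => (h i).[t]].
Proof.
rewrite /mmap mevalE horner_sum; apply: eq_bigr => m _.
rewrite hornerM hornerC /mmap1 horner_prod; congr (_ * _).
by apply: eq_bigr => i _; rewrite horner_exp.
Qed.

Lemma poly_all_roots (C : numFieldType) (q : {poly C}) :
  (forall t, q.[t] = 0) -> q = 0.
Proof.
move=> H; apply: (@roots_geq_poly_eq0 _ q [seq i%:R | i <- iota 0 (size q)]).
- by apply/allP => x /mapP [i _ ->]; apply/rootP.
- rewrite map_inj_uniq ?iota_uniq // => a b /eqP; rewrite eqr_nat => /eqP.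
  done.
- by rewrite size_map size_iota.
Qed.

Section Generic2.
Variables (C : numFieldType) (m1 m2 n : nat) (o : Karr m1 m2 -> bool).
Local Notation hd := (Khead o).
Local Notation tl := (Ktail o).
Local Notation E := (@Eper C m1 m2 n).

Definition At (A : Karr m1 m2 -> 'M[C]_n) (t : C) : Karr m1 m2 -> 'M[C]_n :=
  fun a => A a + t *: E a.

Lemma Msys_At A t i j :
  Msys hd tl (At A t) i j = Msys hd tl A i j + t *: Msys hd tl E i j.
Proof. by apply/matrixP => a v; rewrite !mxE; ring. Qed.

Definition Bm A (i j : 'I_n) : 'M[C]_(m1 + m2 + 2) :=
  - (invmx (Msys hd tl E i j) *m Msys hd tl A i j).

Lemma good_t A t (i j : 'I_n) : (i < j)%N ->
  ~~ root (char_poly (Bm A i j)) t -> Msys hd tl (At A t) i j \in unitmx.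
Proof.
move=> ij nr; have U1 : Msys hd tl E i j \in unitmx by exact: M1_unit.
rewrite Msys_At; apply: contraR nr => nU.
move: nU; rewrite unitmxE unitfE negbK => /det0P [v vn0 vM].
rewrite -eigenvalue_root_char; apply/eigenvalueP.
exists (v *m Msys hd tl E i j).
  rewrite /Bm mulmxN mulmxA mulmxK //.
  move: vM; rewrite mulmxDr -scalemxAr => /eqP; rewrite addr_eq0 => /eqP ->.
  by rewrite opprK.
apply: contra vn0 => /eqP w0.
by rewrite -(mulmxK U1 v) w0 mul0mx.
Qed.

End Generic2.

Lemma main_dir (C : numFieldType) m1 m2 n (o : Karr m1 m2 -> bool)
  (p : {mpoly C[nentries (Karr m1 m2) n]})
  (Hp : U_invariant (Khead o) (Ktail o) p) (A : Karr m1 m2 -> 'M[C]_n)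
  (HA : forall a, upper_tri (A a)) :
  p.@[entry_coords A] = p.@[entry_coords (Dg A)].
Proof.
pose E := @Eper C m1 m2 n.
pose R0 := \prod_(ij : 'I_n * 'I_n) char_poly (Bm o A ij.1 ij.2).
have R0n : R0 != 0.
  by apply: monic_neq0; apply: monic_prod => ij _; exact: char_poly_monic.
pose h1 k := (entry_coords A k)%:P + (entry_coords E k)%:P * 'X.
pose h2 k := (entry_coords (Dg A) k)%:P + (entry_coords E k)%:P * 'X.
pose F := mmap (@polyC C) h1 p - mmap (@polyC C) h2 p.
have Ft t : F.[t] = p.@[entry_coords (At A t)] - p.@[entry_coords (At (Dg A) t)].
  rewrite hornerD hornerN !mmap_horner; congr (_ - _); apply: meval_eq => k;
  by rewrite /h1 /h2 /entry_coords !hornerE /At !mxE mulrC.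
have key t : ~~ root R0 t -> F.[t] = 0.
  move=> nr; rewrite Ft.
  have HAt : forall a, upper_tri (At A t a).
    move=> a; apply/utP => k l lk; rewrite /At /E /Eper !mxE (utE (HA a)) //.
    by rewrite (ord_gtF lk) mulr0 addr0.
  have gAt : goodA (Khead o) (Ktail o) (At A t).
    move=> i j ij; apply: good_t => //; apply: contra nr => r.
    apply/rootP; rewrite horner_prod; apply/eqP/prodf_eq0; exists (i, j) => //.
  rewrite (good_diag Hp HAt gAt); apply/eqP; rewrite subr_eq0; apply/eqP.
  apply: meval_eq => k; rewrite /entry_coords.
  move: (enum_val k) => [a [i j]] /=; rewrite /At /Dg /Eper !mxE.
  by rewrite eqxx; case: (i == j); rewrite ?mulr0 ?addr0.
have FR : F * R0 = 0.
  apply: poly_all_roots => t; rewrite hornerM.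
  by case: (boolP (root R0 t)) => [/rootP -> | /key ->]; rewrite ?mulr0 ?mul0r.
have F0 : F = 0 by move/eqP: FR; rewrite mulf_eq0 (negbTE R0n) orbF => /eqP.
have At0 B : p.@[entry_coords (At B 0)] = p.@[entry_coords B].
  by apply: meval_eq => k; rewrite /entry_coords /At scale0r addr0.
have := Ft 0; rewrite F0 horner0 !At0 => /esym/eqP; rewrite subr_eq0 => /eqP.
done.
Qed.

Lemma dir2 (R : comUnitRingType) (Q1 : finType) n (p : {mpoly R[nentries Q1 n]}) :
  (forall A : Q1 -> 'M[R]_n, (forall a, upper_tri (A a)) ->
     p.@[entry_coords A] = p.@[entry_coords (Dg A)]) ->
  in_diag_subalgebra p.
Proof.
move=> H.
pose lq := [tuple (if (enum_val k).2.1 == (enum_val k).2.2 then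
     'X_(enum_rank ((enum_val k).1, (enum_val k).2.1)) else 0 : {mpoly R[ndiag Q1 n]})
   | k < nentries Q1 n].
exists (p \mPo lq) => A HA.
rewrite H // comp_mpoly_meval; apply: meval_eq => k; rewrite tnth_mktuple /entry_coords.
move: (enum_val k) => [a [i j]] /=; rewrite mxE.
case: (i == j); last by rewrite meval0.
by rewrite mevalXU /diag_coords enum_rankK.
Qed.

Theorem mainTheorem5 (C : numClosedFieldType) (m1 m2 n : nat)
  (o : Karr m1 m2 -> bool)
  (Hsource : exists x : Kvert m1 m2, is_source (Khead o) x)
  (Hsink : exists x : Kvert m1 m2, is_sink (Ktail o) x)
  (p : {mpoly C[nentries (Karr m1 m2) n]}) :
  U_invariant (Khead o) (Ktail o) p <-> in_diag_subalgebra p.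
Proof.
split; last exact: conv.
move=> Hp; apply: dir2 => A HA; exact: (main_dir Hp HA).
Qed.
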